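(* Let $(\mathcal{G}(u_0,v_0),-\Omega^2\,du\,dv)$ with radial function $r$ and stress-energy components $T_{uu},T_{uv},T_{vv}$ be as described in the context, satisfying assumptions (I)–(VII). Suppose the marginally trapped tube $\mathcal{A}$ is nonempty and that condition (A), namely \[ T_{uv}\,\Omega^{-2} < \frac{1}{4r^2}, \] holds at every point of $\mathcal{A}$. Then each connected component of $\mathcal{A}$ is achronal and contains no ingoing null segments.
   Context: Fix double null coordinates $(u,v)$ on $\mathbb{R}^2$ with Minkowski metric $-du\,dv$, time-oriented so that $u$ and $v$ increase toward the future. For $u_0,v_0>0$ let $K(u_0,v_0)=[0,u_0]\times[v_0,\infty)$, $\mathcal{C}_{in}=[0,u_0]\times\{v_0\}$ and $\mathcal{C}_{out}=\{0\}\times[v_0,\infty)$; causal notions $J^\pm, I^\pm$ refer to $K(u_0,v_0)$ with the (conformal) metric. Let $\mathcal{G}(u_0,v_0)\subset K(u_0,v_0)$ be a globally hyperbolic, relatively open subset containing $\mathcal{C}_{in}\cup\mathcal{C}_{out}$, equipped with the metric $-\Omega^2\,du\,dv$ ($\Omega>0$ smooth), a smooth function $r\ge 0$ (the radial function) with $r>0$ on $\mathcal{C}_{in}\cup\mathcal{C}_{out}$, and smooth functions $T_{uu},T_{uv},T_{vv}$ (the components of the stress-energy tensor of the spherically symmetric spacetime $-\Omega^2du\,dv+r^2g_{S^2}$, with Einstein equations $R_{\alpha\beta}-\frac12Rg_{\alpha\beta}=2T_{\alpha\beta}$) such that $\partial_u(\Omega^{-2}\partial_u r)=-r\Omega^{-2}T_{uu}$,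 $\partial_v(\Omega^{-2}\partial_v r)=-r\Omega^{-2}T_{vv}$, $\partial_u m=2r^2\Omega^{-2}(T_{uv}\partial_u r-T_{uu}\partial_v r)$, $\partial_v m=2r^2\Omega^{-2}(T_{uv}\partial_v r-T_{vv}\partial_u r)$, where $m=\frac r2(1+4\Omega^{-2}\partial_u r\,\partial_v r)$ is the Hawking mass. Define the regular region $\mathcal{R}=\{\partial_v r>0,\partial_u r<0\}$, trapped region $\mathcal{T}=\{\partial_v r<0,\partial_u r<0\}$, and marginally trapped tube $\mathcal{A}=\{\partial_v r=0,\partial_u r<0\}$ (subsets of $\mathcal{G}(u_0,v_0)$). Let $r_+=\sup_{\mathcal{C}_{out}}r$, $m_+=\sup_{\mathcal{C}_{out}}m$. Assumptions: (I) $T_{uu},T_{uv},T_{vv}\ge0$ on $\mathcal{G}(u_0,v_0)$; (II) $J^-(\mathcal{G}(u_0,v_0))\subset\mathcal{G}(u_0,v_0)$; (III) $r\le r_+<\infty$ along $\mathcal{C}_{out}$; (IV) $0\le m\le m_+<\infty$ along $\mathcal{C}_{out}$; (V) $\partial_u r<0$ along $\mathcal{C}_{out}$; (VI) $\partial_v r>0$ along $\mathcal{C}_{out}$; (VII) (extension principle, closures taken in $K(u_0,v_0)$) if $p\in\overline{\mathcal{R}}$ and $q\in\overline{\mathcal{R}}\cap I^-(p)$ with $J^-(p)\cap J^+(q)\setminus\{p\}\subset\mathcal{R}\cup\mathcal{A}$, then $p\in\mathcal{R}\cup\mathcal{A}$. An ingoing null segment is a segment of a line $\{v=\text{const}\}$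 (direction $\partial_u$); outgoing null segments lie on lines $\{u=\text{const}\}$. *)

(* Defs.v *)
From Stdlib Require Import Reals List.
From Coquelicot Require Import Coquelicot.
Open Scope R_scope.

Definition Point := (R * R)%type.
Definition pset := Point -> Prop.

Definition at_ (f : R -> R -> R) (p : Point) : R := f (fst p) (snd p).

Definition du (f : R -> R -> R) : R -> R -> R :=
  fun u v => Derive (fun x => f x v) u.
Definition dv (f : R -> R -> R) : R -> R -> R :=
  fun u v => Derive (fun y => f u y) v.

(* Iterated partial derivatives (true = d/du, false = d/dv). *)
Fixpoint iterD (l : list bool) (f : R -> R -> R) : R -> R -> R :=
  match l with
  | nil => f
  | b :: l' => if b then du (iterD l' f) else dv (iterD l' f)
  end.

Definition open_set (U : pset) : Prop :=
  forall p, U p -> exists eps, 0 < eps /\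
    forall q : Point, Rabs (fst q - fst p) < eps -> Rabs (snd q - snd p) < eps -> U q.

Definition smooth_open (U : pset) (f : R -> R -> R) : Prop :=
  forall (l : list bool) (p : Point), U p ->
    ex_derive (fun x => iterD l f x (snd p)) (fst p) /\
    ex_derive (fun y => iterD l f (fst p) y) (snd p) /\
    continuous (fun q : R * R => iterD l f (fst q) (snd q)) p.

Definition smooth_on (S : pset) (f : R -> R -> R) : Prop :=
  exists U : pset, open_set U /\ (forall p, S p -> U p) /\ smooth_open U f.

Definition Kset (u0 v0 : R) : pset :=
  fun p => 0 <= fst p <= u0 /\ v0 <= snd p.
Definition Cin (u0 v0 : R) : pset :=
  fun p => 0 <= fst p <= u0 /\ snd p = v0.
Definition Cout (u0 v0 : R) : pset :=
  fun p => fst p = 0 /\ v0 <= snd p.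

(* Causal relations of K(u0,v0) with the (conformally flat) metric -Omega^2 du dv,
   time oriented by increasing u and v: future directed causal curves are exactly
   those along which u and v are nondecreasing, and K is a product of intervals. *)
Definition causal_le (q p : Point) : Prop := fst q <= fst p /\ snd q <= snd p.
Definition chron_lt (q p : Point) : Prop := fst q < fst p /\ snd q < snd p.

Definition Jminus (u0 v0 : R) (p : Point) : pset := fun x => Kset u0 v0 x /\ causal_le x p.
Definition Jplus (u0 v0 : R) (q : Point) : pset := fun x => Kset u0 v0 x /\ causal_le q x.
Definition Iminus (u0 v0 : R) (p : Point) : pset := fun x => Kset u0 v0 x /\ chron_lt x p.
Definition JminusSet (u0 v0 : R) (S : pset) : pset :=
  fun x => exists p, S p /\ Jminus u0 v0 p x.

Definition rel_open_in (u0 v0 : R) (G : pset) : Prop :=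
  exists U : pset, open_set U /\ forall p, G p <-> (Kset u0 v0 p /\ U p).

(* Global hyperbolicity of G in the 2-dimensional conformally flat setting:
   all causal diamonds J^+(p) ∩ J^-(q) (compact closed rectangles) with
   p, q in G lie in G. *)
Definition glob_hyp (u0 v0 : R) (G : pset) : Prop :=
  forall p q x, G p -> G q -> Jplus u0 v0 p x -> Jminus u0 v0 q x -> G x.

(* Closure in K(u0,v0) (K is closed in R^2). *)
Definition closureK (u0 v0 : R) (S : pset) : pset :=
  fun p => Kset u0 v0 p /\
    forall eps, 0 < eps -> exists q, S q /\ Rabs (fst q - fst p) < eps /\ Rabs (snd q - snd p) < eps.

Definition hawking_mass (Om r : R -> R -> R) : R -> R -> R :=
  fun u v => r u v / 2 * (1 + 4 * / (Om u v ^ 2) * du r u v * dv r u v).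

Definition regular (G : pset) (r : R -> R -> R) : pset :=
  fun p => G p /\ 0 < at_ (dv r) p /\ at_ (du r) p < 0.
Definition trapped (G : pset) (r : R -> R -> R) : pset :=
  fun p => G p /\ at_ (dv r) p < 0 /\ at_ (du r) p < 0.
Definition mtt (G : pset) (r : R -> R -> R) : pset :=
  fun p => G p /\ at_ (dv r) p = 0 /\ at_ (du r) p < 0.

Definition setup (u0 v0 : R) (G : pset) (Om r Tuu Tuv Tvv : R -> R -> R) : Prop :=
  0 < u0 /\ 0 < v0 /\
  (forall p, G p -> Kset u0 v0 p) /\
  rel_open_in u0 v0 G /\ glob_hyp u0 v0 G /\
  (forall p, Cin u0 v0 p -> G p) /\ (forall p, Cout u0 v0 p -> G p) /\
  smooth_on G Om /\ smooth_on G r /\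
  smooth_on G Tuu /\ smooth_on G Tuv /\ smooth_on G Tvv /\
  (forall p, G p -> 0 < at_ Om p) /\
  (forall p, G p -> 0 <= at_ r p) /\
  (forall p, Cin u0 v0 p \/ Cout u0 v0 p -> 0 < at_ r p) /\
  (* the Einstein equations in the stated form *)
  (forall p, G p ->
     at_ (du (fun u v => / (Om u v ^ 2) * du r u v)) p
       = - at_ r p * / (at_ Om p ^ 2) * at_ Tuu p) /\
  (forall p, G p ->
     at_ (dv (fun u v => / (Om u v ^ 2) * dv r u v)) p
       = - at_ r p * / (at_ Om p ^ 2) * at_ Tvv p) /\
  (forall p, G p ->
     at_ (du (hawking_mass Om r)) p
       = 2 * at_ r p ^ 2 * / (at_ Om p ^ 2)
           * (at_ Tuv p * at_ (du r) p - at_ Tuu p * at_ (dv r) p)) /\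
  (forall p, G p ->
     at_ (dv (hawking_mass Om r)) p
       = 2 * at_ r p ^ 2 * / (at_ Om p ^ 2)
           * (at_ Tuv p * at_ (dv r) p - at_ Tvv p * at_ (du r) p)).

Definition assumption_I (G : pset) (Tuu Tuv Tvv : R -> R -> R) : Prop :=
  forall p, G p -> 0 <= at_ Tuu p /\ 0 <= at_ Tuv p /\ 0 <= at_ Tvv p.
Definition assumption_II (u0 v0 : R) (G : pset) : Prop :=
  forall x, JminusSet u0 v0 G x -> G x.
Definition assumption_III (u0 v0 : R) (r : R -> R -> R) : Prop :=
  exists rp, forall p, Cout u0 v0 p -> at_ r p <= rp.
Definition assumption_IV (u0 v0 : R) (Om r : R -> R -> R) : Prop :=
  (forall p, Cout u0 v0 p -> 0 <= at_ (hawking_mass Om r) p) /\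
  exists mp, forall p, Cout u0 v0 p -> at_ (hawking_mass Om r) p <= mp.
Definition assumption_V (u0 v0 : R) (r : R -> R -> R) : Prop :=
  forall p, Cout u0 v0 p -> at_ (du r) p < 0.
Definition assumption_VI (u0 v0 : R) (r : R -> R -> R) : Prop :=
  forall p, Cout u0 v0 p -> 0 < at_ (dv r) p.
Definition assumption_VII (u0 v0 : R) (G : pset) (r : R -> R -> R) : Prop :=
  forall p q,
    closureK u0 v0 (regular G r) p ->
    closureK u0 v0 (regular G r) q -> Iminus u0 v0 p q ->
    (forall x, Jminus u0 v0 p x -> Jplus u0 v0 q x -> x <> p ->
        regular G r x \/ mtt G r x) ->
    regular G r p \/ mtt G r p.

Definition condition_A (G : pset) (Om r Tuv : R -> R -> R) : Prop :=
  forall p, mtt G r p ->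
    at_ Tuv p * / (at_ Om p ^ 2) < 1 / (4 * at_ r p ^ 2).

Definition connected (S : pset) : Prop :=
  ~ exists U V : pset, open_set U /\ open_set V /\
      (forall p, S p -> U p \/ V p) /\
      (exists p, S p /\ U p) /\ (exists p, S p /\ V p) /\
      (forall p, S p -> U p -> V p -> False).

Definition conn_component (S C : pset) : Prop :=
  (exists p, C p) /\ (forall p, C p -> S p) /\ connected C /\
  forall D : pset, connected D -> (forall p, C p -> D p) -> (forall p, D p -> S p) ->
    forall p, D p -> C p.

Definition achronal (S : pset) : Prop :=
  forall p q, S p -> S q -> ~ chron_lt p q.

Definition has_ingoing_segment (S : pset) : Prop :=
  exists a b v, a < b /\ forall u, a <= u <= b -> S (u, v).

(* Main.v *)
Require Import Defs.
From Stdlib Require Import Reals Lra.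
From Coquelicot Require Import Coquelicot.
Open Scope R_scope.

Lemma smooth_ex (G : pset) f u v : smooth_on G f -> G (u, v) -> forall l,
  ex_derive (fun x => iterD l f x v) u /\ ex_derive (fun y => iterD l f u y) v.
Proof.
  intros [U [_ [HU Hs]]] HG l.
  destruct (Hs l (u, v) (HU _ HG)) as [H1 [H2 _]]. simpl in *. tauto.
Qed.

Lemma deriv_neg_local (f : R -> R) x l : is_derive f x l -> l < 0 ->
  exists d, 0 < d /\ forall h, 0 < h < d -> f (x + h) < f x /\ f x < f (x - h).
Proof.
  intros H Hl. apply is_derive_Reals in H.
  destruct (H (- l / 2)) as [d Hd]; [lra|].
  exists d. split; [apply cond_pos|]. intros h Hh.
  assert (A1 : h <> 0) by lra. assert (A2 : -h <> 0) by lra.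
  assert (B1 : Rabs h < d) by (rewrite Rabs_right; lra).
  assert (B2 : Rabs (-h) < d) by (rewrite Rabs_Ropp, Rabs_right; lra).
  specialize (Hd h A1 B1) as E1. specialize (Hd (-h) A2 B2) as E2.
  apply Rabs_def2 in E1. apply Rabs_def2 in E2. destruct E1 as [E1 _]. destruct E2 as [E2 _].
  replace (x + - h) with (x - h) in E2 by ring.
  set (D1 := f (x + h) - f x) in *. set (D2 := f (x - h) - f x) in *.
  assert (H3 : D1 / h < 0) by lra. assert (H4 : D2 / - h < 0) by lra.
  assert (H1 : D1 = D1 / h * h) by (field; lra).
  assert (H2 : D2 = D2 / - h * - h) by (field; lra).
  assert (D1 < 0) by (rewrite H1; apply Rmult_neg_pos; [exact H3|lra]).
  assert (D2 > 0) by (rewrite H2; apply Rmult_neg_neg; [exact H4|lra]).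
  unfold D1, D2 in *. split; lra.
Qed.

Lemma cont_sign (f : R -> R) x : ex_derive f x ->
  (0 < f x -> exists d, 0 < d /\ forall y, Rabs (y - x) < d -> 0 < f y) /\
  (f x < 0 -> exists d, 0 < d /\ forall y, Rabs (y - x) < d -> f y < 0).
Proof.
  intros H.
  assert (C : continuity_pt f x).
  { apply derivable_continuous_pt. exists (Derive f x). apply is_derive_Reals.
    apply Derive_correct; auto. }
  split; intros Hs; destruct (C (Rabs (f x))) as [a [Ha Hb]];
    try (apply Rabs_pos_lt; lra);
    exists a; split; auto; intros y Hy;
    (destruct (Req_dec y x) as [->|Hne]; [lra|]);
    (assert (K : R_dist (f y) (f x) < Rabs (f x)) by (apply Hb; split; [split; [exact I| auto] | exact Hy]));
    unfold R_dist in K; apply Rabs_def2 in K;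
    [rewrite Rabs_right in K | rewrite Rabs_left in K]; lra.
Qed.

Lemma nonincr (f : R -> R) a b : a <= b ->
  (forall x, a <= x <= b -> ex_derive f x /\ Derive f x <= 0) -> f b <= f a.
Proof.
  intros Hab H.
  destruct (MVT_gen f a b (Derive f)) as [c [Hc E]].
  - intros x Hx. rewrite Rmin_left in Hx by lra. rewrite Rmax_right in Hx by lra.
    apply Derive_correct. apply H; lra.
  - intros x Hx. rewrite Rmin_left in Hx by lra. rewrite Rmax_right in Hx by lra.
    apply derivable_continuous_pt. exists (Derive f x). apply is_derive_Reals.
    apply Derive_correct. apply H; lra.
  - rewrite Rmin_left in Hc by lra. rewrite Rmax_right in Hc by lra.
    destruct (H c Hc). nra.
Qed.

Lemma hm_deriv (R1 O A B : R -> R) u :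
  ex_derive R1 u -> ex_derive O u -> ex_derive A u -> ex_derive B u -> O u <> 0 ->
  Derive (fun x : R => R1 x / 2 * (1 + 4 * / (O x ^ 2) * A x * B x)) u =
  (Derive R1 u / 2 * (1 + 4 * / (O u ^ 2) * A u * B u) + R1 u / 2 * (4 * (- (2 * O u * Derive O u) / (O u ^ 2)^2 * A u * B u + / (O u ^ 2) * Derive A u * B u + / (O u ^ 2) * A u * Derive B u))).
Proof.
  intros. apply is_derive_unique. auto_derive.
  - repeat split; auto; intro Z; apply H3; nra.
  - change (Derive (fun x : R => R1 x)) with (Derive R1); change (Derive (fun x : R => O x)) with (Derive O); change (Derive (fun x : R => A x)) with (Derive A); change (Derive (fun x : R => B x)) with (Derive B). set (d1 := Derive R1 u); set (d2 := Derive O u); set (d3 := Derive A u); set (d4 := Derive B u); set (o := O u). field. auto.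
Qed.

Theorem proposition3 (u0 v0 : R) (G : pset) (Om r Tuu Tuv Tvv : R -> R -> R) :
  setup u0 v0 G Om r Tuu Tuv Tvv ->
  assumption_I G Tuu Tuv Tvv ->
  assumption_II u0 v0 G ->
  assumption_III u0 v0 r ->
  assumption_IV u0 v0 Om r ->
  assumption_V u0 v0 r ->
  assumption_VI u0 v0 r ->
  assumption_VII u0 v0 G r ->
  (exists p, mtt G r p) ->
  condition_A G Om r Tuv ->
  forall C : pset, conn_component (mtt G r) C ->
    achronal C /\ ~ has_ingoing_segment C.
Proof.
  intros HS HI HII _ _ HV HVI _ _ HA C HC.
  destruct HS as [Hu0 [Hv0 [HGK [_ [_ [_ [HCout [SOm [Sr [_ [_ [_ [HOm [Hr [_
    [Eu [Ev [Emu _]]]]]]]]]]]]]]]]]].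
  assert (Gdown : forall u v u' v', G (u, v) -> 0 <= u' <= u -> v0 <= v' <= v -> G (u', v')).
  { intros u v u' v' HG Hu Hv. apply HII. exists (u, v). split; auto.
    destruct (HGK _ HG) as [K1 K2]. simpl in *. split; split; simpl; lra. }
  assert (Dfacts : forall u v, G (u, v) ->
    ex_derive (fun x => r x v) u /\ ex_derive (fun x => Om x v) u /\
    ex_derive (fun x => du r x v) u /\ ex_derive (fun x => dv r x v) u /\
    ex_derive (fun y => Om u y) v /\ ex_derive (fun y => dv r u y) v /\
    0 < Om u v).
  { intros u v HG.
    destruct (smooth_ex G r u v Sr HG nil) as [A1 _].
    destruct (smooth_ex G r u v Sr HG (true :: nil)) as [A2 _].
    destruct (smooth_ex G r u v Sr HG (false :: nil)) as [A3 A4].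
    destruct (smooth_ex G Om u v SOm HG nil) as [A5 A6].
    simpl in *. repeat split; auto. apply (HOm (u, v) HG). }
  assert (DuNeg : forall u c, G (u, c) -> du r u c < 0).
  { intros u c HG. destruct (HGK _ HG) as [[K1 K2] K3]; cbn [fst snd] in K1, K2, K3.
    set (k := fun x => / (Om x c ^ 2) * du r x c).
    assert (Hk : k u <= k 0).
    { apply nonincr; [lra|]. intros x Hx.
      assert (Gx : G (x, c)) by (apply (Gdown u c); [exact HG|lra|lra]).
      destruct (Dfacts x c Gx) as [_ [B2 [B3 [_ [_ [_ B7]]]]]].
      split.
      - unfold k. auto_derive. repeat split; auto. intro Z. nra.
      - replace (Derive k x) with (at_ (du (fun u v => / (Om u v ^ 2) * du r u v)) (x, c)) by reflexivity.
        rewrite (Eu (x, c) Gx).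
        pose proof (Hr (x, c) Gx). destruct (HI (x, c) Gx) as [T1 _]. unfold at_ in *; cbn [fst snd] in *.
        assert (0 < / (Om x c ^ 2)) by (apply Rinv_0_lt_compat; nra).
        assert (0 <= r x c * / (Om x c ^ 2)) by nra. nra. }
    assert (G0 : G (0, c)) by (apply (Gdown u c); [exact HG|lra|lra]).
    assert (N0 : du r 0 c < 0) by (apply (HV (0, c)); split; simpl; lra).
    destruct (Dfacts 0 c G0) as [_ [_ [_ [_ [_ [_ P0]]]]]].
    destruct (Dfacts u c HG) as [_ [_ [_ [_ [_ [_ Pu]]]]]].
    unfold k in Hk.
    assert (0 < / (Om 0 c ^ 2)) by (apply Rinv_0_lt_compat; nra).
    assert (0 < / (Om u c ^ 2)) by (apply Rinv_0_lt_compat; nra).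
    nra. }
  assert (GpNeg : forall u c, mtt G r (u, c) -> Derive (fun x => dv r x c) u < 0).
  { intros u c Hm. pose proof Hm as [HG [Hz Hneg]].
    change (dv r u c = 0) in Hz. change (du r u c < 0) in Hneg.
    destruct (Dfacts u c HG) as [B1 [B2 [B3 [B4 [_ [_ B7]]]]]].
    pose proof (Emu (u, c) HG) as E.
    pose proof ((hm_deriv (fun x => r x c) (fun x => Om x c)
       (fun x => du r x c) (fun x => dv r x c) u B1 B2 B3 B4 ltac:(lra))) as D.
    cbv beta in D.
    change (at_ (du (hawking_mass Om r)) (u, c)) with (Derive (fun x => r x c / 2 * (1 + 4 * / (Om x c ^ 2) * du r x c * dv r x c)) u) in E.
    rewrite D in E. clear D.
    change (Derive (fun x => r x c) u) with (du r u c) in E.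
    rewrite Hz in E.
    pose proof (Hr (u, c) HG) as Hr0. pose proof (HI (u, c) HG) as [_ [T2 _]].
    pose proof (HA (u, c) Hm) as HAc. unfold at_ in *; cbn [fst snd] in *.
    rewrite Hz in E. set (w := / (Om u c ^ 2)) in *. set (a := du r u c) in *.
    set (gp := Derive (fun x => dv r x c) u) in *. set (R0 := r u c) in *.
    set (T := Tuv u c) in *.
    assert (Hw : 0 < w) by (apply Rinv_0_lt_compat; nra).
    assert (E2 : a * (1/2 + 2 * R0 * w * gp - 2 * R0 ^ 2 * w * T) = 0) by lra.
    assert (E3 : 1/2 + 2 * R0 * w * gp - 2 * R0 ^ 2 * w * T = 0).
    { destruct (Rmult_integral _ _ E2); [lra | auto]. }
    destruct (Req_dec R0 0) as [Z|Z].
    - rewrite Z in E3. lra.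
    - assert (P : 0 < R0) by lra.
      assert (Q : T * w * (4 * R0 ^ 2) < 1).
      { assert (0 < 4 * R0 ^ 2) by nra.
        apply (Rmult_lt_compat_r (4 * R0 ^ 2)) in HAc; auto.
        replace (1 / (4 * R0 ^ 2) * (4 * R0 ^ 2)) with 1 in HAc by (field; lra). lra. }
      assert (R0 * w * gp < 0) by nra.
      assert (0 < R0 * w) by nra. nra. }
  assert (Loc : forall u c, mtt G r (u, c) -> exists d, 0 < d /\ forall h, 0 < h < d ->
      dv r (u + h) c < 0 /\ 0 < dv r (u - h) c).
  { intros u c Hm. pose proof Hm as [HG [Hz _]]. unfold at_ in Hz; simpl in Hz.
    destruct (Dfacts u c HG) as [_ [_ [_ [B4 _]]]].
    destruct (deriv_neg_local (fun x => dv r x c) u _ (Derive_correct _ _ B4) (GpNeg u c Hm)) as [d [Hd Hh]].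
    exists d. split; auto. intros h Hh'. destruct (Hh h Hh'). unfold dv in *. lra. }
  split.
  -
    intros p q Cp Cq [L1 L2].
    destruct HC as [_ [HCm _]].
    destruct p as [u1 v1], q as [u2 v2]. simpl in L1, L2.
    pose proof (HCm _ Cp) as Mp. pose proof (HCm _ Cq) as Mq.
    destruct Mp as [Gp [Zp _]]. pose proof Mq as [Gq [Zq _]].
    unfold at_ in Zp, Zq; simpl in Zp, Zq.
    destruct (HGK _ Gp) as [[K1 K2] K3]. destruct (HGK _ Gq) as [[K4 K5] K6]. cbn [fst snd] in K1, K2, K3, K4, K5, K6.
    assert (Out : dv r u1 v2 <= 0).
    { set (h := fun y => / (Om u1 y ^ 2) * dv r u1 y).
      assert (Hh : h v2 <= h v1).
      { apply nonincr; [lra|]. intros y Hy.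
        assert (Gy : G (u1, y)) by (apply (Gdown u2 v2); [exact Gq|lra|lra]).
        destruct (Dfacts u1 y Gy) as [_ [_ [_ [_ [B5 [B6 B7]]]]]].
        split.
        - unfold h. auto_derive. repeat split; auto. intro Z. nra.
        - replace (Derive h y) with (at_ (dv (fun u v => / (Om u v ^ 2) * dv r u v)) (u1, y)) by reflexivity.
          rewrite (Ev (u1, y) Gy).
          pose proof (Hr (u1, y) Gy). destruct (HI (u1, y) Gy) as [_ [_ T3]]. unfold at_ in *; cbn [fst snd] in *.
          assert (0 < / (Om u1 y ^ 2)) by (apply Rinv_0_lt_compat; nra).
          assert (0 <= r u1 y * / (Om u1 y ^ 2)) by nra. nra. }
      unfold h in Hh. assert (Hz : dv r u1 v1 = 0) by exact Zp. rewrite Hz in Hh.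
      assert (Gy : G (u1, v2)) by (apply (Gdown u2 v2); [exact Gq|lra|lra]).
      destruct (Dfacts u1 v2 Gy) as [_ [_ [_ [_ [_ [_ B7]]]]]].
      assert (0 < / (Om u1 v2 ^ 2)) by (apply Rinv_0_lt_compat; nra). nra. }
    (* ingoing line v = v2 : dv r u1 v2 > 0 *)
    set (g := fun x => dv r x v2).
    assert (Gseg : forall x, u1 <= x <= u2 -> G (x, v2)) by (intros; apply (Gdown u2 v2); [exact Gq|lra|lra]).
    assert (Zm : forall x, u1 <= x <= u2 -> g x = 0 -> mtt G r (x, v2)).
    { intros x Hx Hg. split; [auto|]. split; unfold at_; simpl; auto. }
    assert (Dg : forall x, u1 <= x <= u2 -> ex_derive g x).
    { intros x Hx. destruct (Dfacts x v2 (Gseg x Hx)) as [_ [_ [_ [B4 _]]]]. exact B4. }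
    destruct (Loc u2 v2 Mq) as [d2 [Hd2 Hl2]].
    assert (Hg1 : g u1 <= 0) by exact Out.
    set (S := fun x => u1 <= x < u2 /\ g x <= 0).
    assert (Sb : bound S) by (exists u2; intros x [Hx _]; lra).
    assert (Sne : exists x, S x) by (exists u1; split; [lra | auto]).
    destruct (completeness S Sb Sne) as [t [Ht1 Ht2]].
    assert (T1 : u1 <= t) by (apply Ht1; split; [lra|auto]).
    set (e := Rmin d2 (u2 - u1)).
    assert (He : 0 < e) by (apply Rmin_pos; lra).
    assert (T2 : t <= u2 - e).
    { apply Ht2. intros x [Hx Hgx]. destruct (Rle_dec x (u2 - e)) as [?|Hn]; auto.
      exfalso. assert (e <= d2) by apply Rmin_l.
      destruct (Hl2 (u2 - x)) as [_ Hp]; [lra|]. unfold g in Hgx.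
      replace (u2 - (u2 - x)) with x in Hp by ring. lra. }
    assert (Tpos : forall x, t < x < u2 -> 0 < g x).
    { intros x Hx. destruct (Rlt_dec 0 (g x)) as [?|Hn]; auto. exfalso.
      assert (S x) by (split; lra). specialize (Ht1 x H). lra. }
    assert (Tin : u1 <= t <= u2) by lra.
    destruct (cont_sign g t (Dg t Tin)) as [Cpos Cneg].
    destruct (Rtotal_order (g t) 0) as [Hlt|[Heq|Hgt]].
    + destruct (Cneg Hlt) as [d [Hd Hy]].
      set (x := t + Rmin d (u2 - t) / 2).
      assert (0 < Rmin d (u2 - t)) by (apply Rmin_pos; lra).
      assert (Rmin d (u2 - t) <= d) by apply Rmin_l.
      assert (Rmin d (u2 - t) <= u2 - t) by apply Rmin_r.
      assert (g x < 0) by (apply Hy; unfold x; rewrite Rabs_right; lra).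
      assert (0 < g x) by (apply Tpos; unfold x; lra). lra.
    + destruct (Loc t v2 (Zm t Tin Heq)) as [d [Hd Hy]].
      set (hh := Rmin d (u2 - t) / 2).
      assert (0 < Rmin d (u2 - t)) by (apply Rmin_pos; lra).
      assert (Rmin d (u2 - t) <= d) by apply Rmin_l.
      assert (Rmin d (u2 - t) <= u2 - t) by apply Rmin_r.
      destruct (Hy hh) as [Hn _]; [unfold hh; lra|].
      assert (0 < g (t + hh)) by (apply Tpos; unfold hh; lra). unfold g in *. lra.
    + destruct (Cpos Hgt) as [d [Hd Hy]].
      destruct (Rle_dec t (t - d / 2)) as [?|_]; [lra|].
      assert (Hub : is_upper_bound S (t - d / 2)).
      { intros x [Hx Hgx]. destruct (Rle_dec x (t - d/2)) as [?|Hn]; auto. exfalso.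
        assert (x <= t) by (apply Ht1; split; auto).
        assert (0 < g x) by (apply Hy; rewrite Rabs_left1; lra). lra. }
      specialize (Ht2 _ Hub). lra.
  -
    intros [a [b [v [Hab Hs]]]].
    destruct HC as [_ [HCm _]].
    assert (Ma : mtt G r (a, v)) by (apply HCm, Hs; lra).
    destruct (Loc a v Ma) as [d [Hd Hy]].
    set (hh := Rmin d (b - a) / 2).
    assert (0 < Rmin d (b - a)) by (apply Rmin_pos; lra).
    assert (Rmin d (b - a) <= d) by apply Rmin_l.
    assert (Rmin d (b - a) <= b - a) by apply Rmin_r.
    destruct (Hy hh) as [Hn _]; [unfold hh; lra|].
    assert (M : mtt G r (a + hh, v)) by (apply HCm, Hs; unfold hh; lra).
    destruct M as [_ [Z _]]. unfold at_ in Z; simpl in Z. lra.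
Qed.
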